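(* Let $(X,T)$ be a topological dynamical system. Then $\operatorname{supp}(X,T)$ is the smallest closed subset $K$ of $X$ with the following property: for every $x\in X$ and every open set $U\supseteq K$, the set $N(x,U)=\{n\in\mathbb{Z}_+:T^nx\in U\}$ has Banach density one. That is, $\operatorname{supp}(X,T)$ has this property, and every closed set $K\subset X$ with this property contains $\operatorname{supp}(X,T)$.
   Context: A topological dynamical system $(X,T)$ consists of a non-empty compact metric space $(X,d)$ and a continuous map $T:X\to X$. $\operatorname{supp}(X,T)$ is the smallest closed set $C\subset X$ with $\mu(C)=1$ for all $T$-invariant Borel probability measures $\mu$. A set $F\subset\mathbb{Z}_+$ has Banach density one if for every $\lambda<1$ there is $N\ge1$ with $\#(F\cap I)\ge\lambda\,\#(I)$ for every interval of integers $I\subset\mathbb{Z}_+$ with $\#(I)\ge N$. *)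

(* Defs.v *)
From Stdlib Require Import Reals List.
Import ListNotations.
Open Scope R_scope.

Section TDS.
Variable X : Type.
Variable d : X -> X -> R.

Definition is_metric : Prop :=
  (forall x y, 0 <= d x y) /\
  (forall x y, d x y = 0 <-> x = y) /\
  (forall x y, d x y = d y x) /\
  (forall x y z, d x z <= d x y + d y z).

Definition is_open (U : X -> Prop) : Prop :=
  forall x, U x -> exists eps, 0 < eps /\ forall y, d x y < eps -> U y.

Definition is_closed (C : X -> Prop) : Prop := is_open (fun x => ~ C x).

Definition is_compact : Prop :=
  forall (I : Type) (U : I -> X -> Prop),
    (forall i, is_open (U i)) -> (forall x, exists i, U i x) ->
    exists l : list I, forall x, exists i, In i l /\ U i x.

Definition is_continuous (T : X -> X) : Prop :=
  forall x eps, 0 < eps -> exists delta, 0 < delta /\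
    forall y, d x y < delta -> d (T x) (T y) < eps.

Inductive borel : (X -> Prop) -> Prop :=
| borel_open : forall U, is_open U -> borel U
| borel_compl : forall A, borel A -> borel (fun x => ~ A x)
| borel_union : forall A : nat -> X -> Prop,
    (forall n, borel (A n)) -> borel (fun x => exists n, A n x)
| borel_ext : forall A B, borel A -> (forall x, A x <-> B x) -> borel B.

(** Borel probability measure (values outside Borel sets are irrelevant) *)
Definition is_borel_prob (mu : (X -> Prop) -> R) : Prop :=
  (forall A B, borel A -> (forall x, A x <-> B x) -> mu A = mu B) /\
  (forall A, borel A -> 0 <= mu A) /\
  mu (fun _ => True) = 1 /\
  (forall A : nat -> X -> Prop,
     (forall n, borel (A n)) ->
     (forall n m x, n <> m -> A n x -> A m x -> False) ->
     infinite_sum (fun n => mu (A n)) (mu (fun x => exists n, A n x))).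

Definition is_T_invariant (T : X -> X) (mu : (X -> Prop) -> R) : Prop :=
  is_borel_prob mu /\ forall A, borel A -> mu (fun x => A (T x)) = mu A.

(** supp(X,T): the smallest closed set of full measure for every invariant
    measure, realised as the intersection of all such closed sets. *)
Definition supp (T : X -> X) : X -> Prop :=
  fun x => forall C, is_closed C ->
    (forall mu, is_T_invariant T mu -> mu C = 1) -> C x.

End TDS.

Fixpoint iter {X : Type} (n : nat) (T : X -> X) (x : X) : X :=
  match n with O => x | S k => T (iter k T x) end.

(** Banach density one, for F a subset of Z_+ = {0,1,2,...}.
    The interval I = {a, ..., a+len-1}; "#(F ∩ I) >= k" is expressed as the
    existence of a duplicate-free list of k elements of F ∩ I. *)
Definition banach_density_one (F : nat -> Prop) : Prop :=
  forall lambda, lambda < 1 ->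
    exists N : nat, (1 <= N)%nat /\
      forall a len : nat, (N <= len)%nat ->
        exists l : list nat, NoDup l /\
          (forall n, In n l -> (a <= n < a + len)%nat /\ F n) /\
          lambda * INR len <= INR (length l).

Definition has_density_property {X : Type} (d : X -> X -> R) (T : X -> X)
  (K : X -> Prop) : Prop :=
  forall (x : X) (U : X -> Prop), is_open X d U -> (forall y, K y -> U y) ->
    banach_density_one (fun n => U (iter n T x)).

(* Main.v *)
From mathcomp Require boolp classical_sets filter.
Require Import Defs.
From Stdlib Require Import Reals List Lra Lia Classical ClassicalEpsilon.
Set Bullet Behavior "Strict Subproofs".
Import ListNotations.
Open Scope R_scope.

Fixpoint sumR (f : nat -> R) (n : nat) : R :=
  match n with O => 0 | S k => sumR f k + f k end.

Lemma sumR_ext f g n : (forall i, (i < n)%nat -> f i = g i) -> sumR f n = sumR g n.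
Proof. induction n; simpl; intros H; auto. rewrite IHn by (intros; apply H; lia). rewrite H by lia. auto. Qed.

Lemma sumR_le f g n : (forall i, (i < n)%nat -> f i <= g i) -> sumR f n <= sumR g n.
Proof. induction n; simpl; intros H. lra. assert (f n <= g n) by (apply H; lia).
 assert (sumR f n <= sumR g n) by (apply IHn; intros; apply H; lia). lra. Qed.



Lemma sumR_nonneg f n : (forall i, (i < n)%nat -> 0 <= f i) -> 0 <= sumR f n.
Proof. induction n; simpl; intros H. lra. assert (0 <= f n) by (apply H; lia).
 assert (0 <= sumR f n) by (apply IHn; intros; apply H; lia). lra. Qed.

Lemma sumR_const c n : sumR (fun _ => c) n = INR n * c.
Proof. induction n; simpl sumR. simpl; lra. rewrite IHn, S_INR. lra. Qed.

Lemma sumR_mono f n m : (forall i, 0 <= f i) -> (n <= m)%nat -> sumR f n <= sumR f m.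
Proof. intros H Hnm. induction Hnm. lra. simpl. specialize (H m). lra. Qed.

Lemma sumR_plus f g n : sumR (fun i => f i + g i) n = sumR f n + sumR g n.
Proof. induction n; simpl; lra. Qed.

Lemma sumR_telescope f g n :
  sumR (fun k => f k + g k - g (S k)) n = sumR f n + g O - g n.
Proof. induction n; simpl. lra. rewrite IHn. lra. Qed.

Lemma sumR_f_R0 f n : sumR f (S n) = sum_f_R0 f n.
Proof. induction n. simpl. lra. simpl sum_f_R0. rewrite <- IHn. simpl. lra. Qed.

Lemma sumR_geom e n : 0 <= e -> sumR (fun i => e / 2 ^ (S i)) n <= e.
Proof.
 intros He. assert (forall n, sumR (fun i => e / 2 ^ (S i)) n = e - e / 2 ^ n).
 { induction n0. simpl. field. change (sumR (fun i => e / 2 ^ (S i)) (S n0)) with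
   (sumR (fun i => e / 2 ^ (S i)) n0 + e / 2 ^ (S n0)). rewrite IHn0. simpl. field.
   apply pow_nonzero. lra. }
 rewrite H. assert (0 < 2 ^ n) by (apply pow_lt; lra).
 assert (0 <= e / 2 ^ n) by (unfold Rdiv; apply Rmult_le_pos; [lra| left; apply Rinv_0_lt_compat; lra]). lra.
Qed.

Lemma exists_floor r : 0 <= r -> exists m : nat, INR m <= r < INR m + 1.
Proof.
 intros Hr. assert (forall M : nat, r < INR M -> exists m : nat, INR m <= r < INR m + 1).
 { induction M; intros HM. simpl in HM; lra.
   destruct (Rlt_or_le r (INR M)). auto. exists M. rewrite S_INR in HM. lra. }
 destruct (INR_unbounded r) as [M HM]. eauto.
Qed.

Lemma exists_nat_inv e : 0 < e -> exists m : nat, / (INR m + 1) < e.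
Proof.
 intros He. destruct (INR_unbounded (/ e)) as [M HM]. exists M.
 assert (0 < /e) by (apply Rinv_0_lt_compat; lra).
 assert (0 <= INR M) by apply pos_INR.
 rewrite <- (Rinv_inv e). apply Rinv_lt_contravar. nra. lra.
Qed.

Lemma infinite_sum_unique f l1 l2 : infinite_sum f l1 -> infinite_sum f l2 -> l1 = l2.
Proof. intros H1 H2. apply (uniqueness_sum f); auto. Qed.

Definition supR (E : R -> Prop) : R :=
  match excluded_middle_informative (bound E /\ exists x, E x) with
  | left h => proj1_sig (completeness E (proj1 h) (proj2 h))
  | right _ => 0 end.

Lemma supR_spec E : bound E -> (exists x, E x) -> is_lub E (supR E).
Proof.
 intros Hb He. unfold supR. destruct excluded_middle_informative as [h|h].
 - destruct (completeness E (proj1 h) (proj2 h)); simpl; auto.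
 - exfalso; tauto.
Qed.

Lemma supR_ub E x : bound E -> E x -> x <= supR E.
Proof. intros Hb Hx. destruct (supR_spec E Hb (ex_intro _ x Hx)) as [H _]. apply H; auto. Qed.

Lemma supR_least E b : (exists x, E x) -> (forall x, E x -> x <= b) -> supR E <= b.
Proof. intros He Hb. destruct (supR_spec E (ex_intro _ b Hb) He) as [_ H]. apply H. intros x Hx; auto. Qed.

Lemma supR_approx E e : bound E -> (exists x, E x) -> 0 < e -> exists x, E x /\ supR E - e < x.
Proof.
 intros Hb He Hpos. apply NNPP. intro Hn.
 assert (supR E <= supR E - e); [|lra].
 apply supR_least; auto. intros x Hx. apply Rnot_lt_le. intro; apply Hn; eauto.
Qed.

Definition infR (E : R -> Prop) : R := - supR (fun t => E (- t)).

Lemma infR_lb E x : (exists b, forall y, E y -> b <= y) -> E x -> infR E <= x.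
Proof.
 intros [b Hb] Hx. unfold infR. assert (- x <= supR (fun t => E (-t))); [|lra].
 apply supR_ub. exists (-b). intros t Ht. specialize (Hb _ Ht). lra.
 rewrite Ropp_involutive; auto.
Qed.

Lemma infR_greatest E b : (exists x, E x) -> (forall x, E x -> b <= x) -> b <= infR E.
Proof.
 intros [x Hx] Hb. unfold infR. assert (supR (fun t => E (-t)) <= -b); [|lra].
 apply supR_least. exists (-x). rewrite Ropp_involutive; auto.
 intros t Ht. specialize (Hb _ Ht). lra.
Qed.

Lemma infR_approx E e : (exists b, forall y, E y -> b <= y) -> (exists x, E x) -> 0 < e ->
  exists x, E x /\ x < infR E + e.
Proof.
 intros [b Hb] [x0 Hx0] He. destruct (supR_approx (fun t => E (-t)) e) as [t [Ht1 Ht2]]; auto.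
 exists (-b). intros t Ht. specialize (Hb _ Ht). lra.
 exists (-x0). rewrite Ropp_involutive; auto.
 exists (-t). split; auto. unfold infR. lra.
Qed.

Lemma Rle_epsilon a b : (forall e, 0 < e -> a <= b + e) -> a <= b.
Proof. intros H. apply Rnot_lt_le. intro Hlt. specialize (H ((a - b)/2) ltac:(lra)). lra. Qed.

Section Metric.
Variable X : Type.
Variable d : X -> X -> R.
Hypothesis Hm : is_metric X d.

Lemma d_nonneg x y : 0 <= d x y. Proof. apply (proj1 Hm). Qed.
Lemma d_refl x : d x x = 0. Proof. apply (proj1 (proj2 Hm)). auto. Qed.
Lemma d_sym x y : d x y = d y x. Proof. apply (proj1 (proj2 (proj2 Hm))). Qed.
Lemma d_tri x y z : d x z <= d x y + d y z. Proof. apply (proj2 (proj2 (proj2 Hm))). Qed.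

Lemma open_ext U V : is_open X d U -> (forall x, U x <-> V x) -> is_open X d V.
Proof. intros HU H x Hx. destruct (HU x) as [e [He H']]. apply H; auto.
 exists e; split; auto. intros; apply H; auto. Qed.

Lemma closed_ext U V : is_closed X d U -> (forall x, U x <-> V x) -> is_closed X d V.
Proof. intros HU H. unfold is_closed. apply (open_ext _ _ HU). intros x; rewrite (H x); tauto. Qed.

Lemma open_True : is_open X d (fun _ => True).
Proof. intros x _. exists 1; split; auto; lra. Qed.

Lemma open_False : is_open X d (fun _ => False).
Proof. intros x []. Qed.

Lemma closed_True : is_closed X d (fun _ => True).
Proof. apply (open_ext _ _ open_False). tauto. Qed.

Lemma closed_False : is_closed X d (fun _ => False).
Proof. apply (open_ext _ _ open_True). tauto. Qed.

Lemma open_inter U V : is_open X d U -> is_open X d V -> is_open X d (fun x => U x /\ V x).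
Proof. intros HU HV x [Ux Vx]. destruct (HU x Ux) as [e1 [He1 H1]].
 destruct (HV x Vx) as [e2 [He2 H2]]. exists (Rmin e1 e2). split.
 apply Rmin_pos; auto. intros y Hy. split. apply H1. eapply Rlt_le_trans; eauto; apply Rmin_l.
 apply H2. eapply Rlt_le_trans; eauto; apply Rmin_r. Qed.

Lemma open_ball c r : is_open X d (fun y => d c y < r).
Proof. intros x Hx. exists (r - d c x). split. lra. intros y Hy.
 pose proof (d_tri c x y). lra. Qed.

Lemma closed_compl_open U : is_open X d U -> is_closed X d (fun x => ~ U x).
Proof. intros HU. unfold is_closed. apply (open_ext _ _ HU). intros; tauto. Qed.

Lemma open_compl_closed F : is_closed X d F -> is_open X d (fun x => ~ F x).
Proof. auto. Qed.

Lemma closed_inter_all (P : (X -> Prop) -> Prop) :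
  (forall C, P C -> is_closed X d C) -> is_closed X d (fun x => forall C, P C -> C x).
Proof.
 intros H x Hx. apply not_all_ex_not in Hx. destruct Hx as [C HC].
 apply imply_to_and in HC. destruct HC as [PC nCx].
 destruct (H C PC x nCx) as [e [He He']]. exists e; split; auto.
 intros y Hy Hall. apply (He' y Hy). exact (Hall C PC).
Qed.

Lemma closed_union F G : is_closed X d F -> is_closed X d G -> is_closed X d (fun x => F x \/ G x).
Proof. intros HF HG. unfold is_closed. apply (open_ext _ _ (open_inter _ _ HF HG)). intros; tauto. Qed.

Lemma closed_inter F G : is_closed X d F -> is_closed X d G -> is_closed X d (fun x => F x /\ G x).
Proof. intros HF HG. apply (closed_ext (fun x => forall C, (C = F \/ C = G) -> C x)).
 apply closed_inter_all. intros C [->| ->]; auto.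
 intros x; split. intros H; split; apply H; auto. intros [H1 H2] C [->| ->]; auto. Qed.

Lemma borel_closed F : is_closed X d F -> borel X d F.
Proof. intros HF. apply (borel_ext _ _ (fun x => ~ ~ F x)).
 apply borel_compl. apply borel_open; auto. intros; tauto. Qed.

Lemma borel_True : borel X d (fun _ => True). Proof. apply borel_open, open_True. Qed.
Lemma borel_False : borel X d (fun _ => False). Proof. apply borel_open, open_False. Qed.

Lemma borel_or A B : borel X d A -> borel X d B -> borel X d (fun x => A x \/ B x).
Proof. intros HA HB. apply (borel_ext _ _ (fun x => exists n, (match n with O => A | _ => B end) x)).
 apply Defs.borel_union. intros [|n]; auto.
 intros x; split. intros [[|n] H]; auto. intros [H|H]. exists O; auto. exists 1%nat; auto. Qed.

Lemma borel_inter A B : borel X d A -> borel X d B -> borel X d (fun x => A x /\ B x).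
Proof. intros HA HB. apply (borel_ext _ _ (fun x => ~ (~ A x \/ ~ B x))).
 apply borel_compl, borel_or; apply borel_compl; auto.
 intros x. tauto. Qed.

Lemma borel_compl' A : borel X d A -> borel X d (fun x => ~ A x).
Proof. apply borel_compl. Qed.

Lemma borel_finter (C : nat -> X -> Prop) m : (forall n, borel X d (C n)) ->
  borel X d (fun x => forall j, (j < m)%nat -> C j x).
Proof. intros H. induction m.
 - apply (borel_ext _ _ _ _ borel_True). intros; split; auto; intros; lia.
 - apply (borel_ext _ _ (fun x => (forall j, (j < m)%nat -> C j x) /\ C m x)).
   apply borel_inter; auto. intros x; split.
   intros [H1 H2] j Hj. destruct (Nat.eq_dec j m). subst; auto. apply H1; lia.
   intros H1; split; auto. Qed.

Lemma borel_funion (C : nat -> X -> Prop) m : (forall n, borel X d (C n)) ->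
  borel X d (fun x => exists j, (j < m)%nat /\ C j x).
Proof. intros H. induction m.
 - apply (borel_ext _ _ _ _ borel_False). intros; split. tauto. intros [j [Hj _]]; lia.
 - apply (borel_ext _ _ (fun x => (exists j, (j < m)%nat /\ C j x) \/ C m x)).
   apply borel_or; auto. intros x; split.
   intros [[j [Hj H1]]|H1]. exists j; split; auto; lia. exists m; auto.
   intros [j [Hj H1]]. destruct (Nat.eq_dec j m). subst; auto. left; exists j; split; auto; lia. Qed.

Lemma least_index (P : nat -> Prop) n : P n -> exists m, P m /\ forall j, (j < m)%nat -> ~ P j.
Proof.
 revert n. apply (well_founded_ind Wf_nat.lt_wf (fun n => P n -> exists m, P m /\ forall j, (j < m)%nat -> ~ P j)).
 intros n IH Pn. destruct (classic (exists j, (j < n)%nat /\ P j)) as [[j [Hj Pj]]|Hno].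
 apply (IH j Hj Pj). exists n; split; auto. intros j Hj Pj; apply Hno; eauto.
Qed.

End Metric.

Lemma iter_S {A} n (f : A -> A) x : iter (S n) f x = f (iter n f x). Proof. reflexivity. Qed.

Section Cont.
Variable X : Type.
Variable d : X -> X -> R.
Hypothesis Hm : is_metric X d.
Variable T : X -> X.
Hypothesis Hcont : is_continuous X d T.

Lemma open_pre U : is_open X d U -> is_open X d (fun x => U (T x)).
Proof. intros HU x Hx. destruct (HU _ Hx) as [e [He H]]. destruct (Hcont x e He) as [dl [Hd H']].
 exists dl; split; auto. Qed.

Lemma open_pre_iter n U : is_open X d U -> is_open X d (fun x => U (iter n T x)).
Proof. revert U; induction n; intros U HU; simpl; auto.
 apply (IHn (fun y => U (T y))). apply open_pre; auto. Qed.

Lemma borel_pre A : borel X d A -> borel X d (fun x => A (T x)).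
Proof. intros HA; induction HA as [U HU|A' HA IH|F HF IH|A' B' HA IH Hx].
 - apply borel_open, open_pre; auto.
 - apply borel_compl; auto.
 - apply (borel_union _ _ (fun n x => F n (T x))); auto.
 - apply (borel_ext _ _ _ _ IH). intros; auto.
Qed.

Lemma borel_pre_iter n A : borel X d A -> borel X d (fun x => A (iter n T x)).
Proof. revert A; induction n; intros A HA; simpl; auto.
 apply (IHn (fun y => A (T y))). apply borel_pre; auto. Qed.
End Cont.

Section GivenMeasure.
Variable X : Type.
Variable d : X -> X -> R.
Hypothesis Hm : is_metric X d.
Variable mu : (X -> Prop) -> R.
Hypothesis Hp : is_borel_prob X d mu.

Lemma mu_ext A B : borel X d A -> (forall x, A x <-> B x) -> mu A = mu B.
Proof. apply (proj1 Hp). Qed.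
Lemma mu_nonneg A : borel X d A -> 0 <= mu A.
Proof. apply (proj1 (proj2 Hp)). Qed.
Lemma mu_True : mu (fun _ => True) = 1.
Proof. apply (proj1 (proj2 (proj2 Hp))). Qed.
Lemma mu_sigma (A : nat -> X -> Prop) : (forall n, borel X d (A n)) ->
     (forall n m x, n <> m -> A n x -> A m x -> False) ->
     infinite_sum (fun n => mu (A n)) (mu (fun x => exists n, A n x)).
Proof. apply (proj2 (proj2 (proj2 Hp))). Qed.

Lemma infinite_sum_eventually f c N : (forall n, (n >= N)%nat -> sum_f_R0 f n = c) -> infinite_sum f c.
Proof. intros H e He. exists N. intros n Hn. rewrite H; auto. unfold R_dist. rewrite Rminus_diag, Rabs_R0. auto. Qed.

Lemma mu_empty : mu (fun _ => False) = 0.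
Proof.
 pose proof (mu_sigma (fun _ _ => False) (fun _ => borel_False _ _) (fun _ _ _ _ H _ => H)) as H. cbv beta in H.
 rewrite (mu_ext (fun x => exists _ : nat, False) (fun _ => False)) in H.
 2:{ apply (borel_ext _ _ _ _ (borel_False _ _)). intros x; split; [intros []|intros [_ []]]. }
 2:{ intros x; split; [intros [_ []]|intros []]. }
 set (c := mu (fun _ => False)) in *.
 assert (0 <= c) by (apply mu_nonneg, borel_False; auto).
 destruct (Req_dec c 0) as [|Hc]; auto. exfalso.
 destruct (H (c/2)) as [N HN]. lra. specialize (HN (S N) ltac:(lia)).
 rewrite sum_cte in HN. unfold R_dist in HN. rewrite S_INR, S_INR in HN.
 pose proof (pos_INR N). rewrite Rabs_right in HN; nra.
Qed.

Lemma mu_add A B : borel X d A -> borel X d B -> (forall x, A x -> B x -> False) ->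
  mu (fun x => A x \/ B x) = mu A + mu B.
Proof.
 intros HA HB Hd. set (Sq := fun n : nat => match n with O => A | 1%nat => B | _ => fun _ => False end).
 assert (HS : forall n, borel X d (Sq n)) by (intros [|[|n]]; simpl; auto; apply borel_False).
 pose proof (mu_sigma Sq HS) as H.
 assert (Hdisj : forall n m x, n <> m -> Sq n x -> Sq m x -> False).
 { intros [|[|n]] [|[|m]] x Hnm; simpl; try tauto; try lia; eauto. }
 specialize (H Hdisj).
 rewrite (mu_ext _ (fun x => A x \/ B x)) in H.
 2:{ apply Defs.borel_union; auto. }
 2:{ intros x; split. intros [[|[|n]] Hn]; simpl in Hn; tauto. intros [H1|H1]. exists O; auto. exists 1%nat; auto. }
 apply (infinite_sum_unique _ _ _ H). apply (infinite_sum_eventually _ _ 1%nat).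
 intros n Hn. induction Hn. simpl. lra.
 simpl sum_f_R0. rewrite IHHn. destruct m. lia. simpl. rewrite mu_empty. lra.
Qed.

Lemma mu_mono A B : borel X d A -> borel X d B -> (forall x, A x -> B x) -> mu A <= mu B.
Proof.
 intros HA HB H. rewrite (mu_ext B (fun x => A x \/ (B x /\ ~ A x))); auto.
 2:{ intros x; split. intros Bx; destruct (classic (A x)); auto. intros [Ax|[Bx _]]; auto. }
 rewrite mu_add; auto. pose proof (mu_nonneg (fun x => B x /\ ~ A x)). 
 assert (borel X d (fun x => B x /\ ~ A x)) by (apply borel_inter, borel_compl; auto).
 specialize (H0 H1). lra. apply borel_inter, borel_compl; auto. intros x Ax [_ nAx]; auto.
Qed.

Lemma mu_compl A : borel X d A -> mu (fun x => ~ A x) = 1 - mu A.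
Proof. intros HA. assert (mu (fun x => A x \/ ~ A x) = mu A + mu (fun x => ~ A x)).
 apply mu_add; auto. apply borel_compl; auto.
 rewrite (mu_ext _ (fun _ => True)) in H. rewrite mu_True in H. lra.
 apply borel_or; auto; apply borel_compl; auto. intros x; split; auto. intros _; apply classic. Qed.

Lemma mu_le1 A : borel X d A -> mu A <= 1.
Proof. intros HA. pose proof (mu_compl A HA). pose proof (mu_nonneg _ (borel_compl _ _ _ HA)). lra. Qed.

Lemma mu_incl_excl A B : borel X d A -> borel X d B ->
  mu (fun x => A x \/ B x) + mu (fun x => A x /\ B x) = mu A + mu B.
Proof.
 intros HA HB.
 rewrite (mu_ext (fun x => A x \/ B x) (fun x => A x \/ (B x /\ ~ A x))).
 2: apply borel_or; auto. 2:{ intros x; split. intros [Ax|Bx]; auto. destruct (classic (A x)); auto. intros [Ax|[Bx _]]; auto. }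
 rewrite (mu_ext B (fun x => (B x /\ ~ A x) \/ (A x /\ B x))); auto.
 2:{ intros x; split. intros Bx; destruct (classic (A x)); auto. intros [[Bx _]|[_ Bx]]; auto. }
 assert (borel X d (fun x => B x /\ ~ A x)) by (apply borel_inter, borel_compl; auto).
 rewrite !mu_add; auto. lra. apply borel_inter; auto.
 intros x [_ nA] [Ax _]; auto. intros x Ax [_ nA]; auto.
Qed.

Lemma mu_inter_full A B : borel X d A -> borel X d B -> mu A = 1 -> mu B = 1 ->
  mu (fun x => A x /\ B x) = 1.
Proof. intros HA HB H1 H2. pose proof (mu_incl_excl A B HA HB).
 pose proof (mu_le1 _ (borel_or _ _ _ _ HA HB)). pose proof (mu_le1 _ (borel_inter _ _ _ _ HA HB)).
 assert (mu (fun x => A x \/ B x) >= 1). { rewrite <- H1. apply Rle_ge, mu_mono; auto. apply borel_or; auto. }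
 lra. Qed.

Variable B : nat -> X -> Prop.
Hypothesis HB : forall n, borel X d (B n).

Fixpoint Lset (n k : nat) : X -> Prop :=
  match n with
  | O => fun _ => k = O
  | S n' => match k with
            | O => fun _ => True
            | S k' => fun x => Lset n' (S k') x \/ (Lset n' k' x /\ B n' x)
            end
  end.

Lemma Lset_borel n k : borel X d (Lset n k).
Proof. revert k; induction n; intros k; simpl.
 - destruct k. apply (borel_ext _ _ _ _ (borel_True _ _)); intros; tauto.
   apply (borel_ext _ _ _ _ (borel_False _ _)); intros; split; [tauto| intros; discriminate].
 - destruct k. apply borel_True; auto. apply borel_or; auto. apply borel_inter; auto. Qed.

Lemma Lset_0 n x : Lset n 0 x.
Proof. destruct n; simpl; auto. Qed.

Lemma Lset_S n k x : Lset n (S k) x -> Lset n k x.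
Proof. revert k; induction n; intros k; simpl. intros; discriminate.
 destruct k. auto. intros [H|[H1 H2]]. left; auto. right; split; auto. Qed.

Lemma Lset_mono n k k' x : (k <= k')%nat -> Lset n k' x -> Lset n k x.
Proof. intros H; induction H; auto. intros; apply IHle, Lset_S; auto. Qed.

Lemma Lset_bound n k x : Lset n k x -> (k <= n)%nat.
Proof. revert k; induction n; intros k; simpl. lia. destruct k. lia.
 intros [H|[H _]]. apply IHn in H; lia. apply IHn in H; lia. Qed.

Lemma Lset_sum n : sumR (fun i => mu (B i)) n = sumR (fun k => mu (Lset n (S k))) n.
Proof.
 induction n. reflexivity.
 change (sumR (fun i => mu (B i)) (S n)) with (sumR (fun i => mu (B i)) n + mu (B n)).
 rewrite IHn.
 transitivity (sumR (fun k => mu (Lset n (S k)) + mu (fun x => Lset n k x /\ B n x)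
                 - mu (fun x => Lset n (S k) x /\ B n x)) (S n)).
 - rewrite sumR_telescope.
   change (sumR (fun k => mu (Lset n (S k))) (S n)) with
     (sumR (fun k => mu (Lset n (S k))) n + mu (Lset n (S n))).
   rewrite (mu_ext (Lset n (S n)) (fun _ => False)), mu_empty.
   rewrite (mu_ext (fun x => Lset n (S n) x /\ B n x) (fun _ => False)), mu_empty.
   rewrite (mu_ext (fun x => Lset n 0 x /\ B n x) (B n)). lra.
   apply borel_inter; auto; apply Lset_borel. intros x; split. tauto. intros; split; auto; apply Lset_0.
   apply borel_inter; auto; apply Lset_borel. intros x; split. intros [H _]; apply Lset_bound in H; lia. tauto.
   apply Lset_borel. intros x; split. intros H; apply Lset_bound in H; lia. tauto.
 - apply sumR_ext. intros k Hk. simpl Lset.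
   pose proof (mu_incl_excl (Lset n (S k)) (fun x => Lset n k x /\ B n x)) as H. cbv beta in H.
   rewrite (mu_ext (fun x => Lset n (S k) x /\ Lset n k x /\ B n x) (fun x => Lset n (S k) x /\ B n x)) in H.
   symmetry. 
   assert (mu (fun x => Lset n (S k) x \/ Lset n k x /\ B n x) = mu (Lset n (S k)) + mu (fun x : X => Lset n k x /\ B n x) - mu (fun x : X => Lset n (S k) x /\ B n x)).
   { apply Rplus_eq_reg_r with (mu (fun x : X => Lset n (S k) x /\ B n x)). rewrite H. ring.
     apply Lset_borel. apply borel_inter; auto; apply Lset_borel. }
   exact H0.
   apply borel_inter; auto. apply Lset_borel. apply borel_inter; auto; apply Lset_borel.
   intros x; split. tauto. intros [H1 H2]; split; auto. split; auto. apply Lset_S; auto.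
Qed.

Lemma Lset_list n (l : list nat) x : NoDup l -> (forall i, In i l -> (i < n)%nat /\ B i x) ->
  Lset n (length l) x.
Proof.
 revert l; induction n; intros l Hnd Hl.
 - destruct l as [|i l]. simpl; auto. destruct (Hl i (or_introl eq_refl)); lia.
 - destruct (in_dec Nat.eq_dec n l) as [Hin|Hnin].
   + destruct (in_split _ _ Hin) as [l1 [l2 ->]].
     rewrite length_app. simpl length. rewrite Nat.add_succ_r. simpl Lset. right. split.
     * rewrite <- length_app. apply IHn. apply (NoDup_remove_1 _ _ _ Hnd).
       intros i Hi. assert (In i (l1 ++ n :: l2)) by (apply in_app_or in Hi; apply in_or_app; simpl; tauto).
       destruct (Hl i H) as [H1 H2]. split; auto. assert (i <> n). intro; subst. apply (NoDup_remove_2 _ _ _ Hnd); auto. lia.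
     * apply (Hl n). apply in_or_app; simpl; auto.
   + assert (Lset n (length l) x). apply IHn; auto. intros i Hi. destruct (Hl i Hi). split; auto.
     assert (i <> n) by (intro; subst; auto). lia.
     destruct (length l). apply Lset_0. simpl. left; auto.
Qed.

Lemma count_measure n m : inhabited X ->
  (forall x, exists l, NoDup l /\ (forall i, In i l -> (i < n)%nat /\ B i x) /\ (m <= length l)%nat) ->
  INR m <= sumR (fun i => mu (B i)) n.
Proof.
 intros [x0] H. rewrite Lset_sum.
 assert (Hmn : (m <= n)%nat).
 { destruct (H x0) as [l [Hnd [Hl Hm']]]. apply (Nat.le_trans _ _ _ Hm').
   rewrite <- (length_seq n 0). apply NoDup_incl_length; auto. intros i Hi. apply in_seq. destruct (Hl i Hi); lia. }
 apply Rle_trans with (sumR (fun k => mu (Lset n (S k))) m).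
 - rewrite <- (Rmult_1_r (INR m)). rewrite <- sumR_const. apply Req_le. apply sumR_ext.
   intros k Hk. rewrite (mu_ext _ (fun _ => True)). symmetry; apply mu_True. apply Lset_borel.
   intros x; split; auto. intros _. destruct (H x) as [l [Hnd [Hl Hm']]].
   apply (Lset_mono _ _ (length l)). lia. apply Lset_list; auto.
 - apply sumR_mono; auto. intros; apply mu_nonneg, Lset_borel.
Qed.

End GivenMeasure.

Section Part3.
Variable X : Type.
Variable d : X -> X -> R.
Hypothesis Hm : is_metric X d.
Variable T : X -> X.
Hypothesis Hcont : is_continuous X d T.
Hypothesis Hne : inhabited X.

Lemma borel_cinter (C : nat -> X -> Prop) : (forall n, borel X d (C n)) -> borel X d (fun x => forall n, C n x).
Proof. intros H. apply (borel_ext _ _ (fun x => ~ exists n, ~ C n x)).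
 apply borel_compl, Defs.borel_union. intros n; apply borel_compl; auto.
 intros x; split. intros H1 n. apply NNPP; intro; apply H1; eauto. intros H1 [n Hn]; auto. Qed.

Lemma borel_cond (P : Prop) A : borel X d A -> borel X d (fun x => P -> A x).
Proof. intros H. destruct (classic P) as [p|np].
 apply (borel_ext _ _ _ _ H). intros x; split; auto.
 apply (borel_ext _ _ _ _ (borel_True _ _)). intros x; split; auto. intros _ p; tauto. Qed.

Lemma Lset_monoB (B B' : nat -> X -> Prop) n k x : (forall i, B i x -> B' i x) ->
  Lset X B n k x -> Lset X B' n k x.
Proof. intros H. revert k; induction n; intros k; simpl; auto. destruct k; auto.
 intros [H1|[H1 H2]]; [left|right]; auto. Qed.

Lemma Lset_all (B : nat -> X -> Prop) n k x : (forall i, B i x) -> (k <= n)%nat -> Lset X B n k x.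
Proof. intros H. revert k; induction n; intros k Hk; simpl. lia. destruct k; auto.
 destruct (Nat.eq_dec k n). subst. right; split; auto. left; apply IHn; lia. Qed.

Variable mu : (X -> Prop) -> R.
Hypothesis Hp : is_borel_prob X d mu.

Lemma mu_finite_add (D : nat -> X -> Prop) n : (forall n, borel X d (D n)) ->
  (forall n m x, n <> m -> D n x -> D m x -> False) ->
  mu (fun x => exists j, (j < n)%nat /\ D j x) = sumR (fun j => mu (D j)) n.
Proof.
 intros HD Hdis. induction n.
 - simpl. rewrite (mu_ext _ _ _ Hp _ (fun _ => False)). apply (mu_empty _ _ mu Hp).
   apply borel_funion; auto. intros x; split. intros [j [Hj _]]; lia. tauto.
 - simpl. rewrite <- IHn. rewrite (mu_ext _ _ _ Hp _ (fun x => (exists j, (j < n)%nat /\ D j x) \/ D n x)).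
   apply (mu_add _ _ mu Hp). apply borel_funion; auto. auto.
   intros x [j [Hj H1]] H2. apply (Hdis j n x); auto; lia.
   apply borel_funion; auto. intros x; split.
   intros [j [Hj H1]]. destruct (Nat.eq_dec j n). subst; auto. left; exists j; split; auto; lia.
   intros [[j [Hj H1]]|H1]. exists j; split; auto. exists n; split; auto.
Qed.

Lemma mu_cont_below (C : nat -> X -> Prop) e : (forall n, borel X d (C n)) ->
  (forall n x, C n x -> C (S n) x) -> 0 < e ->
  exists N, mu (fun x => exists n, C n x) - e < mu (C N).
Proof.
 intros HC Hinc He.
 set (D := fun n x => C n x /\ forall j, (j < n)%nat -> ~ C j x).
 assert (HD : forall n, borel X d (D n)).
 { intros n. apply borel_inter; auto. apply borel_finter. intros; apply borel_compl; auto. }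
 assert (Hdis : forall n m x, n <> m -> D n x -> D m x -> False).
 { intros n m x Hnm [H1 H2] [H3 H4]. destruct (Nat.lt_gt_cases n m) as [[H|H] _]; auto.
   apply (H4 n); auto. apply (H2 m); auto. }
 assert (Hmono : forall n m x, (n <= m)%nat -> C n x -> C m x).
 { intros n m x H; induction H; auto. }
 pose proof (mu_sigma _ _ mu Hp D HD Hdis) as Hs.
 rewrite (mu_ext _ _ _ Hp _ (fun x => exists n, C n x)) in Hs.
 2:{ apply Defs.borel_union; auto. }
 2:{ intros x; split. intros [n [Hn _]]; eauto. intros [n Hn].
     destruct (least_index (fun n => C n x) n Hn) as [m [Hm1 Hm2]]. exists m; split; auto. }
 destruct (Hs e He) as [N HN]. exists N. specialize (HN N (le_n _)).
 rewrite <- sumR_f_R0, <- mu_finite_add in HN; auto.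
 rewrite (mu_ext _ _ _ Hp _ (C N)) in HN.
 unfold R_dist in HN. apply Rabs_def2 in HN. lra.
 apply borel_funion; auto. intros x; split.
 intros [j [Hj [H1 _]]]. apply (Hmono j); auto; lia.
 intros H1. destruct (least_index (fun n => C n x) N H1) as [m [Hm1 Hm2]].
 exists m. split. destruct (Nat.le_gt_cases m N). lia. exfalso. apply (Hm2 N); auto.
 split; auto.
Qed.

Lemma open_nbhd K : is_closed X d K -> mu K < 1 ->
  exists U, is_open X d U /\ (forall y, K y -> U y) /\ mu U < 1.
Proof.
 intros HK Hlt.
 set (U := fun m y => exists z, K z /\ d y z < / (INR m + 1)).
 assert (HUo : forall m, is_open X d (U m)).
 { intros m y [z [Kz Hz]]. exists (/ (INR m + 1) - d y z). split. lra.
   intros y' Hy'. exists z. split; auto. pose proof (d_tri _ _ Hm y' y z). rewrite (d_sym _ _ Hm y' y) in H. lra. }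
 assert (Hpos : forall m, 0 < / (INR m + 1)).
 { intros m. apply Rinv_0_lt_compat. pose proof (pos_INR m). lra. }
 assert (HKb : borel X d K) by (apply borel_closed; auto).
 destruct (mu_cont_below (fun m y => ~ U m y) ((1 - mu K)/2)) as [N HN].
 - intros n; apply borel_compl, borel_open; auto.
 - intros n x Hn [z [Kz Hz]]. apply Hn. exists z; split; auto. eapply Rlt_le_trans; eauto.
   apply Rinv_le_contravar. pose proof (pos_INR n); lra. rewrite S_INR; lra.
 - lra.
 - exists (U N). split; auto. split.
   + intros y Ky. exists y. split; auto. rewrite (d_refl _ _ Hm). auto.
   + rewrite (mu_ext _ _ _ Hp _ (fun x => ~ K x)) in HN.
     rewrite (mu_compl _ _ mu Hp) in HN by auto. rewrite (mu_compl _ _ mu Hp) in HN.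
     lra. apply borel_open; auto.
     apply Defs.borel_union. intros n; apply borel_compl, borel_open; auto.
     intros x; split.
     * intros [n Hn] Kx. apply Hn. exists x. split; auto. rewrite (d_refl _ _ Hm); auto.
     * intros nKx. destruct (HK x nKx) as [e [He He']]. destruct (exists_nat_inv e He) as [n Hn].
       exists n. intros [z [Kz Hz]]. apply (He' z); auto. lra.
Qed.

Lemma mu_iter_inv U n : is_T_invariant X d T mu -> borel X d U ->
  mu (fun x => U (iter n T x)) = mu U.
Proof. intros [_ Hinv]. revert U; induction n; intros U HU. reflexivity.
 simpl. rewrite (IHn (fun y => U (T y))). apply Hinv; auto. apply borel_pre; auto. Qed.

Lemma part3_measure K : is_closed X d K -> has_density_property d T K ->
  is_T_invariant X d T mu -> mu K = 1.
Proof.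
 intros HK Hdens Hinv.
 assert (HKb : borel X d K) by (apply borel_closed; auto).
 destruct (Req_dec (mu K) 1) as [|Hne1]; auto. exfalso.
 assert (mu K < 1) by (pose proof (mu_le1 _ _ mu Hp K HKb); lra).
 destruct (open_nbhd K HK H) as [U [HUo [HKU HU1]]].
 assert (HUb : borel X d U) by (apply borel_open; auto).
 set (eta := (1 - mu U) / 3). assert (Heta : 0 < eta) by (unfold eta; lra).
 set (lam := 1 - eta).
 set (B := fun i x => U (iter i T x)).
 assert (HB : forall i, borel X d (B i)) by (intros i; apply borel_pre_iter; auto).
 set (G := fun N x => forall M, (N <= M)%nat -> forall k, INR k <= lam * INR M -> Lset X B M k x).
 assert (HGb : forall N, borel X d (G N)).
 { intros N. apply borel_cinter. intros M. apply borel_cond. apply borel_cinter. intros k.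
   apply borel_cond. apply Lset_borel; auto. }
 destruct (mu_cont_below G eta HGb) as [N HN].
 { intros n x Hx M HM. apply Hx. lia. }
 auto.
 rewrite (mu_ext _ _ _ Hp _ (fun _ => True)), (mu_True _ _ mu Hp) in HN.
 2:{ apply Defs.borel_union; auto. }
 2:{ intros x; split; auto. intros _.
     destruct (Hdens x U HUo HKU lam) as [N0 [HN0 HN0']]. unfold lam; lra.
     exists N0. intros M HM k Hk. destruct (HN0' 0%nat M HM) as [l [Hnd [Hl Hlen]]].
     apply (Lset_mono _ B _ _ (length l)). apply INR_le. lra.
     apply (Lset_list X B). auto. intros i Hi. destruct (Hl i Hi). split; auto. lia. }
 destruct (INR_unbounded (/ eta)) as [M0 HM0].
 set (M := Nat.max N M0).
 assert (HMeta : 1 <= INR M * eta).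
 { assert (INR M0 <= INR M) by (apply le_INR; unfold M; lia).
   assert (/ eta * eta = 1) by (field; lra). nra. }
 assert (HMpos : 0 < INR M) by nra.
 destruct (exists_floor (lam * INR M)) as [m [Hm1 Hm2]]. pose proof (mu_nonneg _ _ _ Hp U HUb). unfold lam, eta in *; nra.
 set (B' := fun i x => B i x \/ ~ G N x).
 assert (HB' : forall i, borel X d (B' i)) by (intros i; apply borel_or; auto; apply borel_compl; auto).
 assert (Hmle : INR m <= sumR (fun i => mu (B' i)) M).
 { rewrite (Lset_sum X d mu Hp B' HB').
   apply Rle_trans with (sumR (fun k => mu (Lset X B' M (S k))) m).
   - rewrite <- (Rmult_1_r (INR m)). rewrite <- sumR_const. apply Req_le. apply sumR_ext.
     intros k Hk. rewrite (mu_ext _ _ _ Hp _ (fun _ => True)). symmetry; apply (mu_True _ _ mu Hp). apply Lset_borel; auto.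
     intros x; split; auto. intros _. apply (Lset_mono _ _ _ _ m). lia.
     destruct (classic (G N x)) as [Gx|nGx].
     + apply (Lset_monoB B). intros i Hi; left; auto. apply Gx. unfold M; lia. auto.
     + apply Lset_all. intros i; right; auto. apply INR_le. unfold lam in Hm1. nra.
   - apply sumR_mono. intros; apply mu_nonneg with d; auto; apply Lset_borel; auto.
     apply INR_le. unfold lam in Hm1. nra. }
 assert (Hsum : sumR (fun i => mu (B' i)) M <= INR M * (mu U + (1 - mu (G N)))).
 { rewrite <- sumR_const. apply sumR_le. intros i Hi.
   apply Rle_trans with (mu (B i) + mu (fun x => ~ G N x)).
   - pose proof (mu_incl_excl _ _ mu Hp (B i) (fun x => ~ G N x) (HB i) (borel_compl _ _ _ (HGb N))).
     assert (Hbb : borel X d (fun x => B i x /\ ~ G N x)) by (apply borel_inter; auto; apply borel_compl; auto).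
     pose proof (mu_nonneg _ _ mu Hp (fun x => B i x /\ ~ G N x) Hbb). cbv beta in *.
     unfold B'. lra.
   - unfold B. rewrite mu_iter_inv; auto. rewrite (mu_compl _ _ mu Hp); auto. lra. }
 assert (INR M * (1 - mu (G N)) < INR M * eta) by (apply Rmult_lt_compat_l; lra).
 unfold lam, eta in *.
 assert (INR M * (mu U + (1 - mu (G N))) = INR M * mu U + INR M * (1 - mu (G N))) by ring.
 assert ((1 - (1 - mu U) / 3) * INR M = INR M - INR M * ((1 - mu U)/3)) by ring.
 assert (INR M * ((1 - mu U)/3) * 3 = INR M - INR M * mu U) by field.
 lra.
Qed.

End Part3.

Definition is_ultra (Uf : (nat -> Prop) -> Prop) : Prop :=
  Uf (fun _ => True) /\ ~ Uf (fun _ => False) /\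
  (forall A B, Uf A -> Uf B -> Uf (fun n => A n /\ B n)) /\
  (forall A B : nat -> Prop, (forall n, A n -> B n) -> Uf A -> Uf B) /\
  (forall A, Uf A \/ Uf (fun n => ~ A n)) /\ (forall m, Uf (fun n => (m <= n)%nat)).

Lemma nat_ultra : exists Uf, is_ultra Uf.
Proof.
destruct (@filter.ultraFilterLemma nat filter.eventually _) as [G [HG HsG]].
exists G.
assert (PF : filter.ProperFilter G) by (apply filter.ultra_proper).
assert (F : filter.Filter G) by (apply filter.filter_filter).
split; [|split; [|split; [|split; [|split]]]].
- apply (@filter.filterT _ G F).
- intro H. apply (@filter.filter_not_empty _ G PF). replace classical_sets.set0 with (fun _ : nat => False). exact H. reflexivity.
- intros A B HA HB. exact (@filter.filterI _ G F A B HA HB).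
- intros A B HAB HA. exact (@filter.filterS _ G F A B HAB HA).
- intro A. exact (filter.in_ultra_setVsetC A HG).
- intro m. apply HsG. exists m. exact I. intros n Hn. exact (ssrbool.elimT ssrnat.leP Hn).
Qed.

Section Ulim.
Variable Uf : (nat -> Prop) -> Prop.
Hypothesis HU : is_ultra Uf.

Lemma uf_True : Uf (fun _ => True). Proof. apply HU. Qed.
Lemma uf_nonempty A : Uf A -> exists n, A n.
Proof. intros H. apply NNPP. intro Hn. apply (proj1 (proj2 HU)).
 apply (proj1 (proj2 (proj2 (proj2 HU))) A); auto. intros n An; apply Hn; eauto. Qed.
Lemma uf_inter A B : Uf A -> Uf B -> Uf (fun n => A n /\ B n). Proof. apply HU. Qed.
Lemma uf_mono (A B : nat -> Prop) : (forall n, A n -> B n) -> Uf A -> Uf B. Proof. apply HU. Qed.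
Lemma uf_split A : Uf A \/ Uf (fun n => ~ A n). Proof. apply HU. Qed.
Lemma uf_tail m : Uf (fun n => (m <= n)%nat). Proof. apply HU. Qed.

Definition is_ulim (s : nat -> R) (L : R) := forall e, 0 < e -> Uf (fun k => Rabs (s k - L) < e).

Lemma ulim_unique s L1 L2 : is_ulim s L1 -> is_ulim s L2 -> L1 = L2.
Proof.
 intros H1 H2. apply NNPP. intro Hne. set (e := Rabs (L1 - L2) / 2).
 assert (He : 0 < e) by (unfold e; assert (L1 - L2 <> 0) by (intro; apply Hne; lra); pose proof (Rabs_pos_lt _ H); lra).
 destruct (uf_nonempty _ (uf_inter _ _ (H1 e He) (H2 e He))) as [k [Hk1 Hk2]].
 assert (Rabs (L1 - L2) <= Rabs (s k - L1) + Rabs (s k - L2)).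
 { replace (L1 - L2) with (-(s k - L1) + (s k - L2)) by ring.
   eapply Rle_trans. apply Rabs_triang. rewrite Rabs_Ropp. lra. }
 unfold e in *. lra.
Qed.

Lemma ulim_exists s : (forall k, 0 <= s k <= 1) -> exists L, is_ulim s L.
Proof.
 intros Hs. set (E := fun t => t <= 1 /\ Uf (fun k => t <= s k)).
 assert (Hb : bound E) by (exists 1; intros t [Ht _]; auto).
 assert (He0 : E 0) by (split; [lra|]; apply (uf_mono (fun _ => True)); [intros k _; apply Hs| apply uf_True]).
 exists (supR E). intros e He.
 destruct (supR_approx E e Hb (ex_intro _ 0 He0) He) as [t [[Ht1 Ht2] Ht3]].
 assert (Hup : Uf (fun k => s k < supR E + e)).
 { destruct (uf_split (fun k => s k < supR E + e)) as [H|H]; auto. exfalso.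
   destruct (Rle_lt_dec (supR E + e) 1).
   - assert (supR E + e <= supR E); [|lra]. apply supR_ub; auto. split; auto.
     apply (uf_mono _ _ (fun n Hn => Rnot_lt_le _ _ Hn) H).
   - destruct (uf_nonempty _ H) as [k Hk]. specialize (Hs k). lra. }
 apply (uf_mono (fun k => t <= s k /\ s k < supR E + e)).
 intros k [H1 H2]. apply Rabs_def1; lra. apply uf_inter; auto.
Qed.

Lemma ulim_plus s t Ls Lt : is_ulim s Ls -> is_ulim t Lt -> is_ulim (fun k => s k + t k) (Ls + Lt).
Proof. intros H1 H2 e He. apply (uf_mono (fun k => Rabs (s k - Ls) < e/2 /\ Rabs (t k - Lt) < e/2)).
 intros k [A B]. replace (s k + t k - (Ls + Lt)) with ((s k - Ls) + (t k - Lt)) by ring.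
 eapply Rle_lt_trans. apply Rabs_triang. lra. apply uf_inter; [apply H1|apply H2]; lra. Qed.

Lemma ulim_ext s t L : (forall k, s k = t k) -> is_ulim s L -> is_ulim t L.
Proof. intros H H1 e He. apply (uf_mono _ _ (fun k Hk => eq_ind _ (fun v => Rabs (v - L) < e) Hk _ (H k)) (H1 e He)). Qed.

Lemma ulim_const c : is_ulim (fun _ => c) c.
Proof. intros e He. apply (uf_mono (fun _ => True)); [|apply uf_True]. intros; rewrite Rminus_diag, Rabs_R0; auto. Qed.

Lemma ulim_le s t Ls Lt : is_ulim s Ls -> is_ulim t Lt -> (forall k, s k <= t k) -> Ls <= Lt.
Proof. intros H1 H2 H. apply Rnot_lt_le. intro Hlt. set (e := (Ls - Lt)/2).
 destruct (uf_nonempty _ (uf_inter _ _ (H1 e ltac:(unfold e; lra)) (H2 e ltac:(unfold e; lra)))) as [k [A B]].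
 apply Rabs_def2 in A. apply Rabs_def2 in B. specialize (H k). unfold e in *. lra. Qed.

Lemma ulim_vanish s : (forall k, Rabs (s k) <= / (INR k + 1)) -> is_ulim s 0.
Proof. intros H e He. destruct (exists_nat_inv e He) as [m Hm].
 apply (uf_mono (fun n => (m <= n)%nat)); [|apply uf_tail]. intros n Hn.
 rewrite Rminus_0_r. eapply Rle_lt_trans. apply H. eapply Rle_lt_trans; [|apply Hm].
 apply Rinv_le_contravar. pose proof (pos_INR m); lra. apply le_INR in Hn; lra. Qed.

Definition ulim (s : nat -> R) : R :=
  match excluded_middle_informative (exists L, is_ulim s L) with
  | left h => proj1_sig (constructive_indefinite_description _ h)
  | right _ => 0 end.

Lemma ulim_spec s : (exists L, is_ulim s L) -> is_ulim s (ulim s).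
Proof. intros H. unfold ulim. destruct excluded_middle_informative as [h|h]; [|tauto].
 destruct (constructive_indefinite_description _ h); auto. Qed.

Lemma ulim_spec01 s : (forall k, 0 <= s k <= 1) -> is_ulim s (ulim s).
Proof. intros H; apply ulim_spec, ulim_exists; auto. Qed.

End Ulim.

Section Construct.
Variable X : Type.
Variable d : X -> X -> R.
Hypothesis Hm : is_metric X d.
Hypothesis Hcpt : is_compact X d.
Variable T : X -> X.
Hypothesis Hcont : is_continuous X d T.
Variable nu : (X -> Prop) -> R.
Hypothesis Hnu01 : forall A, 0 <= nu A <= 1.
Hypothesis Hnu_add : forall A B, (forall x, A x -> B x -> False) -> nu (fun x => A x \/ B x) = nu A + nu B.
Hypothesis Hnu_mono : forall A B : X -> Prop, (forall x, A x -> B x) -> nu A <= nu B.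
Hypothesis Hnu_T : nu (fun _ => True) = 1.
Hypothesis Hnu_inv : forall A, nu (fun x => A (T x)) = nu A.

Lemma nu_empty : nu (fun _ => False) = 0.
Proof. pose proof (Hnu_add (fun _ => False) (fun _ => False) (fun _ H _ => H)).
 assert (nu (fun x => False \/ False) <= nu (fun _ => False)) by (apply Hnu_mono; tauto). pose proof (Hnu01 (fun _ => False)). lra. Qed.

Lemma nu_sub2 A B : nu (fun x => A x \/ B x) <= nu A + nu B.
Proof. apply Rle_trans with (nu (fun x => A x \/ (B x /\ ~ A x))).
 apply Hnu_mono. intros x [H|H]; auto. destruct (classic (A x)); auto.
 rewrite Hnu_add. assert (nu (fun x => B x /\ ~ A x) <= nu B) by (apply Hnu_mono; tauto). lra.
 intros x H [_ H']; auto. Qed.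

Lemma nu_fsub (C : nat -> X -> Prop) n : nu (fun x => exists j, (j < n)%nat /\ C j x) <= sumR (fun j => nu (C j)) n.
Proof. induction n; simpl.
 - rewrite <- nu_empty. apply Hnu_mono. intros x [j [Hj _]]; lia.
 - eapply Rle_trans; [|apply Rplus_le_compat_r; apply IHn].
   eapply Rle_trans; [|apply nu_sub2]. apply Hnu_mono. intros x [j [Hj H]].
   destruct (Nat.eq_dec j n). subst; auto. left; exists j; split; auto; lia. Qed.

Definition rho (V : X -> Prop) : R :=
  supR (fun t => exists K, is_closed X d K /\ (forall x, K x -> V x) /\ t = nu K).

Lemma rho_set_bound V : bound (fun t => exists K, is_closed X d K /\ (forall x, K x -> V x) /\ t = nu K).
Proof. exists 1. intros t [K [_ [_ ->]]]. apply Hnu01. Qed.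

Lemma rho_set_ne V : exists t, (exists K, is_closed X d K /\ (forall x, K x -> V x) /\ t = nu K).
Proof. exists (nu (fun _ => False)), (fun _ => False). split. apply closed_False. split; tauto. Qed.

Lemma rho_ub V K : is_closed X d K -> (forall x, K x -> V x) -> nu K <= rho V.
Proof. intros HK HKV. apply supR_ub. apply rho_set_bound. eauto. Qed.

Lemma rho_le V : rho V <= nu V.
Proof. apply supR_least. apply rho_set_ne. intros t [K [_ [HK ->]]]. apply Hnu_mono; auto. Qed.

Lemma rho_ge0 V : 0 <= rho V.
Proof. rewrite <- nu_empty. apply rho_ub. apply closed_False. tauto. Qed.

Lemma rho_le1 V : rho V <= 1.
Proof. eapply Rle_trans. apply rho_le. apply Hnu01. Qed.

Lemma rho_approx V e : 0 < e -> exists K, is_closed X d K /\ (forall x, K x -> V x) /\ rho V - e < nu K.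
Proof. intros He. destruct (supR_approx _ e (rho_set_bound V) (rho_set_ne V) He) as [t [[K [H1 [H2 ->]]] H3]].
 exists K; auto. Qed.

Lemma rho_mono V W : (forall x, V x -> W x) -> rho V <= rho W.
Proof. intros H. apply supR_least. apply rho_set_ne. intros t [K [HK [HKV ->]]]. apply rho_ub; auto. Qed.

Definition mus (A : X -> Prop) : R :=
  infR (fun t => exists V, is_open X d V /\ (forall x, A x -> V x) /\ t = rho V).

Lemma mus_lbset A : exists b, forall y, (exists V, is_open X d V /\ (forall x, A x -> V x) /\ y = rho V) -> b <= y.
Proof. exists 0. intros y [V [_ [_ ->]]]. apply rho_ge0. Qed.

Lemma mus_ne A : exists t, exists V, is_open X d V /\ (forall x, A x -> V x) /\ t = rho V.
Proof. exists (rho (fun _ => True)), (fun _ => True). split. apply open_True. split; auto. Qed.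

Lemma mus_le A V : is_open X d V -> (forall x, A x -> V x) -> mus A <= rho V.
Proof. intros HV HAV. apply infR_lb. apply mus_lbset. eauto. Qed.

Lemma mus_approx A e : 0 < e -> exists V, is_open X d V /\ (forall x, A x -> V x) /\ rho V < mus A + e.
Proof. intros He. destruct (infR_approx _ e (mus_lbset A) (mus_ne A) He) as [t [[V [H1 [H2 ->]]] H3]].
 exists V; auto. Qed.

Lemma mus_ge0 A : 0 <= mus A.
Proof. apply infR_greatest. apply mus_ne. intros t [V [_ [_ ->]]]. apply rho_ge0. Qed.

Lemma mus_le1 A : mus A <= 1.
Proof. eapply Rle_trans. apply (mus_le A (fun _ => True)). apply open_True. auto. apply rho_le1. Qed.

Lemma mus_mono A B : (forall x, A x -> B x) -> mus A <= mus B.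
Proof. intros H. apply infR_greatest. apply mus_ne. intros t [V [HV [HBV ->]]]. apply mus_le; auto. Qed.

Lemma mus_ext A B : (forall x, A x <-> B x) -> mus A = mus B.
Proof. intros H. apply Rle_antisym; apply mus_mono; intros x; apply H. Qed.

Lemma mus_open V : is_open X d V -> mus V = rho V.
Proof. intros HV. apply Rle_antisym. apply mus_le; auto.
 apply infR_greatest. apply mus_ne. intros t [W [HW [HVW ->]]]. apply rho_mono; auto. Qed.

Lemma mus_True : mus (fun _ => True) = 1.
Proof. rewrite mus_open by apply open_True. apply Rle_antisym. apply rho_le1.
 rewrite <- Hnu_T. apply rho_ub. apply closed_True. auto. Qed.

Lemma mus_empty : mus (fun _ => False) = 0.
Proof. apply Rle_antisym; [|apply mus_ge0]. rewrite mus_open by apply open_False.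
 eapply Rle_trans. apply rho_le. rewrite nu_empty. lra. Qed.

Lemma bound_list (l : list (option (nat * nat))) : exists N M, forall n m, In (Some (n, m)) l -> (n < N)%nat /\ (m <= M)%nat.
Proof. induction l as [|a l [N [M IH]]]. exists O, O. intros n m [].
 destruct a as [[n0 m0]|].
 - exists (Nat.max N (S n0)), (Nat.max M m0). intros n m [H|H].
   inversion H; subst; lia. destruct (IH n m H); lia.
 - exists N, M. intros n m [H|H]. discriminate. auto. Qed.

Lemma inv_pos m : 0 < / (INR m + 1).
Proof. apply Rinv_0_lt_compat. pose proof (pos_INR m). lra. Qed.

Lemma cover_lemma K (V : nat -> X -> Prop) : is_closed X d K -> (forall n, is_open X d (V n)) ->
  (forall x, K x -> exists n, V n x) -> exists N, nu K <= sumR (fun n => rho (V n)) N.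
Proof.
 intros HK HV Hcov.
 set (Fp := fun n m y => K y /\ forall z, d y z < / (INR m + 1) -> V n z).
 assert (HFc : forall n m, is_closed X d (Fp n m)).
 { intros n m y Hy. unfold Fp in Hy. apply not_and_or in Hy. destruct Hy as [Hy|Hy].
   - destruct (HK y Hy) as [e [He He']]. exists e; split; auto. intros y' Hy' [H1 _]. apply (He' y'); auto.
   - apply not_all_ex_not in Hy. destruct Hy as [z Hz]. apply imply_to_and in Hz. destruct Hz as [Hz1 Hz2].
     exists (/ (INR m + 1) - d y z). split. lra. intros y' Hy' [_ H]. apply Hz2, H.
     pose proof (d_tri _ _ Hm y' y z). rewrite (d_sym _ _ Hm y' y) in H0. lra. }
 set (G := fun (i : option (nat * nat)) => match i with
     | None => fun y => ~ K y
     | Some (n, m) => fun y => exists w, d y w < / (INR m + 1) /\ forall z, d w z < 2 * / (INR m + 1) -> V n z end).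
 assert (HGo : forall i, is_open X d (G i)).
 { intros [[n m]|]; simpl. intros y [w [Hw Hw']]. exists (/ (INR m + 1) - d y w). split. lra.
   intros y' Hy'. exists w. split; auto. pose proof (d_tri _ _ Hm y' y w). rewrite (d_sym _ _ Hm y' y) in H. lra.
   apply HK. }
 destruct (Hcpt _ G HGo) as [l Hl].
 { intros y. destruct (classic (K y)) as [Ky|nKy]; [|exists None; auto].
   destruct (Hcov y Ky) as [n Hn]. destruct (HV n y Hn) as [e [He He']].
   destruct (exists_nat_inv (e/2)) as [m Hmm]. lra.
   exists (Some (n, m)). simpl. exists y. split. rewrite (d_refl _ _ Hm). apply inv_pos.
   intros z Hz. apply He'. lra. }
 destruct (bound_list l) as [N [M HNM]].
 exists N. apply Rle_trans with (nu (fun y => exists n, (n < N)%nat /\ Fp n M y)).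
 - apply Hnu_mono. intros y Ky. destruct (Hl y) as [[[n m]|] [Hin Hi]]; simpl in Hi.
   + destruct Hi as [w [Hw Hw']]. destruct (HNM n m Hin). exists n. split; auto. split; auto.
     intros z Hz. apply Hw'. assert (/ (INR M + 1) <= / (INR m + 1)).
     { apply Rinv_le_contravar. pose proof (pos_INR m); lra. apply le_INR in H0. lra. }
     pose proof (d_tri _ _ Hm w y z). rewrite (d_sym _ _ Hm w y) in H2. lra.
   + contradiction.
 - eapply Rle_trans. apply nu_fsub. apply sumR_le. intros n Hn. apply rho_ub; auto.
   intros y [_ Hy]. apply Hy. rewrite (d_refl _ _ Hm). apply inv_pos.
Qed.

Lemma open_cunion (V : nat -> X -> Prop) : (forall n, is_open X d (V n)) -> is_open X d (fun x => exists n, V n x).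
Proof. intros H x [n Hn]. destruct (H n x Hn) as [e [He He']]. exists e; split; auto. intros y Hy; exists n; auto. Qed.

Lemma mus_sub_eps (A : nat -> X -> Prop) e : 0 < e ->
  exists N, mus (fun x => exists n, A n x) <= sumR (fun n => mus (A n)) N + e.
Proof.
 intros He.
 assert (H : forall n, exists V, is_open X d V /\ (forall x, A n x -> V x) /\ rho V < mus (A n) + (e/2) / 2 ^ (S n)).
 { intros n. apply mus_approx. apply Rdiv_lt_0_compat. lra. apply pow_lt; lra. }
 set (V := fun n => proj1_sig (constructive_indefinite_description _ (H n))).
 assert (HV : forall n, is_open X d (V n) /\ (forall x, A n x -> V n x) /\ rho (V n) < mus (A n) + (e/2) / 2 ^ (S n)).
 { intros n. unfold V. destruct (constructive_indefinite_description _ (H n)); auto. }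
 destruct (rho_approx (fun x => exists n, V n x) (e/2)) as [K [HK [HKW HKr]]]. lra.
 destruct (cover_lemma K V HK) as [N HN]. intros n; apply HV. auto.
 exists N.
 assert (mus (fun x => exists n, A n x) <= rho (fun x => exists n, V n x)).
 { apply mus_le. apply open_cunion; intros n; apply HV. intros x [n Hn]. exists n; apply HV; auto. }
 assert (sumR (fun n => rho (V n)) N <= sumR (fun n => mus (A n) + (e/2) / 2 ^ (S n)) N).
 { apply sumR_le. intros n _. left; apply HV. }
 rewrite sumR_plus in H1. pose proof (sumR_geom (e/2) N). lra.
Qed.

Lemma mus_sub2 A B : mus (fun x => A x \/ B x) <= mus A + mus B.
Proof.
 apply Rle_epsilon. intros e He.
 set (Sq := fun n : nat => match n with O => A | 1%nat => B | _ => fun _ => False end).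
 destruct (mus_sub_eps Sq e He) as [N HN].
 rewrite (mus_ext _ (fun x => exists n, Sq n x)).
 eapply Rle_trans. apply HN. apply Rplus_le_compat_r.
 assert (forall N, sumR (fun n => mus (Sq n)) N <= mus A + mus B).
 { intros N0. induction N0. simpl. pose proof (mus_ge0 A); pose proof (mus_ge0 B); lra.
   simpl. destruct N0 as [|[|N1]]; simpl in *. pose proof (mus_ge0 B); lra. lra. rewrite mus_empty. lra. }
 auto.
 intros x; split. intros [H|H]. exists O; auto. exists 1%nat; auto. intros [[|[|n]] H]; simpl in H; tauto.
Qed.

Definition Mcar (E : X -> Prop) := forall A, mus (fun x => A x /\ E x) + mus (fun x => A x /\ ~ E x) <= mus A.

Lemma Mcar_ext E F : Mcar E -> (forall x, E x <-> F x) -> Mcar F.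
Proof. intros H Hx A. rewrite (mus_ext _ (fun x => A x /\ E x)), (mus_ext (fun x => A x /\ ~ F x) (fun x => A x /\ ~ E x)).
 apply H. intros x; rewrite (Hx x); tauto. intros x; rewrite (Hx x); tauto. Qed.

Lemma Mcar_compl E : Mcar E -> Mcar (fun x => ~ E x).
Proof. intros H A. rewrite (mus_ext (fun x => A x /\ ~ ~ E x) (fun x => A x /\ E x)).
 specialize (H A). lra. intros x; split; [intros [H1 H2]; split; auto; apply NNPP; auto|tauto]. Qed.

Lemma Mcar_eq E A : Mcar E -> mus A = mus (fun x => A x /\ E x) + mus (fun x => A x /\ ~ E x).
Proof. intros H. apply Rle_antisym; [|apply H]. eapply Rle_trans; [|apply mus_sub2].
 apply mus_mono. intros x Ax. destruct (classic (E x)); auto. Qed.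

Lemma Mcar_closed F : is_closed X d F -> Mcar F.
Proof.
 intros HF A. apply Rle_epsilon. intros e He.
 destruct (mus_approx A (e/3)) as [V [HV [HAV HVr]]]. lra.
 assert (HW1 : is_open X d (fun x => V x /\ ~ F x)) by (apply open_inter; auto).
 destruct (rho_approx (fun x => V x /\ ~ F x) (e/3)) as [K [HK [HKW HKr]]]. lra.
 assert (HW2 : is_open X d (fun x => V x /\ ~ K x)) by (apply open_inter; auto).
 destruct (rho_approx (fun x => V x /\ ~ K x) (e/3)) as [K' [HK' [HKW' HKr']]]. lra.
 assert (H1 : mus (fun x => A x /\ ~ F x) <= rho (fun x => V x /\ ~ F x)).
 { apply mus_le; auto. intros x [Ax nF]; split; auto. }
 assert (H2 : mus (fun x => A x /\ F x) <= rho (fun x => V x /\ ~ K x)).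
 { apply mus_le; auto. intros x [Ax Fx]; split; auto. intros Kx. destruct (HKW x Kx); auto. }
 assert (H3 : nu K + nu K' <= rho V).
 { rewrite <- Hnu_add. apply rho_ub. apply closed_union; auto. intros x [Kx|Kx]. apply HKW; auto. apply HKW'; auto.
   intros x Kx Kx'. destruct (HKW' x Kx'); auto. }
 lra.
Qed.

Lemma Mcar_or E F : Mcar E -> Mcar F -> Mcar (fun x => E x \/ F x).
Proof.
 intros HE HF A. pose proof (HE A). pose proof (HF (fun x => A x /\ ~ E x)). cbv beta in H0.
 assert (mus (fun x => A x /\ (E x \/ F x)) <= mus (fun x => A x /\ E x) + mus (fun x => (A x /\ ~ E x) /\ F x)).
 { eapply Rle_trans; [|apply mus_sub2]. apply mus_mono. intros x [Ax [Ex|Fx]]; auto.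
   destruct (classic (E x)); auto. }
 rewrite (mus_ext (fun x => A x /\ ~ (E x \/ F x)) (fun x => (A x /\ ~ E x) /\ ~ F x)). lra.
 intros x; tauto.
Qed.

Lemma Mcar_False : Mcar (fun _ => False).
Proof. apply Mcar_closed, closed_False. Qed.

Lemma Mcar_funion (E : nat -> X -> Prop) n : (forall n, Mcar (E n)) -> Mcar (fun x => exists j, (j < n)%nat /\ E j x).
Proof. intros H. induction n.
 - apply (Mcar_ext _ _ Mcar_False). intros x; split. tauto. intros [j [Hj _]]; lia.
 - apply (Mcar_ext _ _ (Mcar_or _ _ IHn (H n))). intros x; split.
   intros [[j [Hj H1]]|H1]. exists j; split; auto; lia. exists n; auto.
   intros [j [Hj H1]]. destruct (Nat.eq_dec j n). subst; auto. left; exists j; split; auto; lia. Qed.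

Lemma Mcar_and E F : Mcar E -> Mcar F -> Mcar (fun x => E x /\ F x).
Proof. intros HE HF. apply (Mcar_ext _ _ (Mcar_compl _ (Mcar_or _ _ (Mcar_compl _ HE) (Mcar_compl _ HF)))).
 intros x; split. intros H. apply NNPP; intro; apply H; tauto. tauto. Qed.

Lemma Mcar_finter (E : nat -> X -> Prop) n : (forall n, Mcar (E n)) -> Mcar (fun x => forall j, (j < n)%nat -> E j x).
Proof. intros H. apply (Mcar_ext _ _ (Mcar_compl _ (Mcar_funion (fun j x => ~ E j x) n (fun j => Mcar_compl _ (H j))))).
 intros x; split. intros H1 j Hj. apply NNPP; intro; apply H1; eauto. intros H1 [j [Hj H2]]; auto. Qed.

Lemma Mcar_fadd (D : nat -> X -> Prop) A n : (forall n, Mcar (D n)) ->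
  (forall n m x, n <> m -> D n x -> D m x -> False) ->
  mus (fun x => A x /\ exists j, (j < n)%nat /\ D j x) = sumR (fun j => mus (fun x => A x /\ D j x)) n.
Proof.
 intros HM Hdis. induction n.
 - simpl. rewrite <- mus_empty. apply mus_ext. intros x; split. intros [_ [j [Hj _]]]; lia. tauto.
 - simpl. rewrite <- IHn. rewrite (Mcar_eq (D n)); auto. rewrite Rplus_comm. f_equal.
   + apply mus_ext. intros x; split. intros [[Ax [j [Hj Dj]]] nD]. split; auto. exists j; split; auto.
     destruct (Nat.eq_dec j n). subst; contradiction. lia.
     intros [Ax [j [Hj Dj]]]. split. split; auto. exists j; split; auto. intros Dn. apply (Hdis j n x); auto. lia.
   + apply mus_ext. intros x; split. intros [[Ax _] Dn]; auto. intros [Ax Dn]. split; auto. split; auto. exists n; auto.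
Qed.

Lemma Mcar_cunion (E : nat -> X -> Prop) : (forall n, Mcar (E n)) -> Mcar (fun x => exists n, E n x).
Proof.
 intros HE. set (D := fun n x => E n x /\ forall j, (j < n)%nat -> ~ E j x).
 assert (HD : forall n, Mcar (D n)) by (intros n; apply Mcar_and; auto; apply Mcar_finter; intros; apply Mcar_compl; auto).
 assert (Hdis : forall n m x, n <> m -> D n x -> D m x -> False).
 { intros n m x Hnm [H1 H2] [H3 H4]. destruct (Nat.lt_gt_cases n m) as [[H|H] _]; auto.
   apply (H4 n); auto. apply (H2 m); auto. }
 apply (Mcar_ext (fun x => exists n, D n x)).
 2:{ intros x; split. intros [n [Hn _]]; eauto. intros [n Hn].
     destruct (least_index (fun n => E n x) n Hn) as [m [Hm1 Hm2]]. exists m; split; auto. }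
 intros A. apply Rle_epsilon. intros e He.
 destruct (mus_sub_eps (fun n x => A x /\ D n x) e He) as [N HN].
 rewrite (mus_ext (fun x => A x /\ exists n, D n x) (fun x => exists n, A x /\ D n x)).
 2:{ intros x; split. intros [Ax [n Dn]]; eauto. intros [n [Ax Dn]]; eauto. }
 pose proof (Mcar_eq (fun x => exists j, (j < N)%nat /\ D j x) A (Mcar_funion D N HD)).
 cbv beta in H. rewrite Mcar_fadd in H; auto.
 assert (mus (fun x => A x /\ ~ (exists n, D n x)) <= mus (fun x => A x /\ ~ (exists j, (j < N)%nat /\ D j x))).
 { apply mus_mono. intros x [Ax H1]. split; auto. intros [j [_ Hj]]; eauto. }
 lra.
Qed.

Lemma Mcar_borel E : borel X d E -> Mcar E.
Proof.
 intros HE. induction HE as [U HU|A' HA IH|F HF IH|A' B' HA IH Hx].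
 - apply (Mcar_ext (fun x => ~ ~ U x)). apply Mcar_compl, Mcar_closed, closed_compl_open; auto.
   intros x; split; [apply NNPP|tauto].
 - apply Mcar_compl; auto.
 - apply Mcar_cunion; auto.
 - apply (Mcar_ext _ _ IH); auto.
Qed.

Lemma mus_fadd (D : nat -> X -> Prop) n : (forall n, borel X d (D n)) ->
  (forall n m x, n <> m -> D n x -> D m x -> False) ->
  mus (fun x => exists j, (j < n)%nat /\ D j x) = sumR (fun j => mus (D j)) n.
Proof.
 intros HB Hdis. rewrite (mus_ext _ (fun x => True /\ exists j, (j < n)%nat /\ D j x)).
 rewrite Mcar_fadd; auto. apply sumR_ext. intros; apply mus_ext; tauto.
 intros; apply Mcar_borel; auto. intros; tauto.
Qed.

Lemma mus_sigma (A : nat -> X -> Prop) : (forall n, borel X d (A n)) ->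
  (forall n m x, n <> m -> A n x -> A m x -> False) ->
  infinite_sum (fun n => mus (A n)) (mus (fun x => exists n, A n x)).
Proof.
 intros HB Hdis e He. destruct (mus_sub_eps A (e/2)) as [N HN]. lra.
 exists N. intros n Hn. rewrite <- sumR_f_R0, <- mus_fadd; auto.
 assert (mus (fun x => exists j, (j < S n)%nat /\ A j x) <= mus (fun x => exists n, A n x)).
 { apply mus_mono. intros x [j [_ Hj]]; eauto. }
 assert (sumR (fun n => mus (A n)) N <= sumR (fun n => mus (A n)) (S n)).
 { apply sumR_mono. intros; apply mus_ge0. lia. }
 rewrite <- (mus_fadd A (S n)) in H0; auto. unfold R_dist. apply Rabs_def1; lra.
Qed.

Lemma image_closed K : is_closed X d K -> is_closed X d (fun y => exists z, K z /\ y = T z).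
Proof.
 intros HK y Hy.
 assert (Hpos : forall z : {z | K z}, 0 < d (T (proj1_sig z)) y / 2).
 { intros [z Kz]. simpl. assert (d (T z) y <> 0). intro H0. apply (proj1 (proj2 Hm)) in H0. apply Hy; eauto.
   pose proof (d_nonneg _ _ Hm (T z) y). lra. }
 set (delta := fun z : {z | K z} => proj1_sig (constructive_indefinite_description _ (Hcont (proj1_sig z) _ (Hpos z)))).
 assert (Hdelta : forall z, 0 < delta z /\ forall y', d (proj1_sig z) y' < delta z -> d (T (proj1_sig z)) (T y') < d (T (proj1_sig z)) y / 2).
 { intros z. unfold delta. destruct constructive_indefinite_description; auto. }
 set (G := fun i : option {z | K z} => match i with None => fun x => ~ K x | Some z => fun x => d (proj1_sig z) x < delta z end).
 destruct (Hcpt _ G) as [l Hl].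
 { intros [z|]; simpl. apply open_ball; exact Hm. apply HK. }
 { intros x. destruct (classic (K x)) as [Kx|nKx]. exists (Some (exist _ x Kx)). simpl. rewrite (d_refl _ _ Hm). apply Hdelta.
   exists None; auto. }
 set (r := fold_right (fun i acc => match i with Some z => Rmin (d (T (proj1_sig z)) y / 2) acc | None => acc end) 1 l).
 assert (Hr : 0 < r /\ forall z, In (Some z) l -> r <= d (T (proj1_sig z)) y / 2).
 { unfold r. clear Hl. induction l as [|a l IH]; simpl. split. lra. tauto.
   destruct IH as [IH1 IH2]. destruct a as [z|]. split. apply Rmin_pos; auto.
   intros z' [H|H]. inversion H; subst. apply Rmin_l. eapply Rle_trans. apply Rmin_r. auto.
   split; auto. intros z' [H|H]. discriminate. auto. }
 destruct Hr as [Hr1 Hr2]. exists r. split; auto.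
 intros y' Hy' [z' [Kz' ->]]. destruct (Hl z') as [[z|] [Hin Hz]]; simpl in Hz; [|contradiction].
 destruct (Hdelta z) as [_ Hd]. specialize (Hd z' Hz). specialize (Hr2 z Hin).
 pose proof (d_tri _ _ Hm (T (proj1_sig z)) (T z') y). rewrite (d_sym _ _ Hm (T z') y) in H. lra.
Qed.

Lemma rho_pre V : rho (fun x => V (T x)) <= rho V.
Proof.
 apply supR_least. apply rho_set_ne. intros t [K [HK [HKV ->]]].
 apply Rle_trans with (nu (fun y => exists z, K z /\ y = T z)).
 - rewrite <- (Hnu_inv (fun y => exists z, K z /\ y = T z)). apply Hnu_mono. intros x Kx; eauto.
 - apply rho_ub. apply image_closed; auto. intros y [z [Kz ->]]. apply HKV; auto.
Qed.

Lemma mus_pre A : mus (fun x => A (T x)) <= mus A.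
Proof.
 apply infR_greatest. apply mus_ne. intros t [V [HV [HAV ->]]].
 eapply Rle_trans. apply (mus_le _ (fun x => V (T x))). apply open_pre; auto. intros x; apply HAV.
 apply rho_pre.
Qed.

Lemma mus_compl_sum E : borel X d E -> mus E + mus (fun x => ~ E x) = 1.
Proof. intros HE. rewrite <- mus_True. rewrite (Mcar_eq E (fun _ => True)). f_equal; apply mus_ext; tauto.
 apply Mcar_borel; auto. Qed.

Lemma mus_inv A : borel X d A -> mus (fun x => A (T x)) = mus A.
Proof.
 intros HA. pose proof (mus_compl_sum _ HA). pose proof (mus_compl_sum _ (borel_pre _ _ _ Hcont _ HA)).
 pose proof (mus_pre A). pose proof (mus_pre (fun x => ~ A x)). cbv beta in *. lra.
Qed.

Lemma mus_invariant : is_T_invariant X d T mus.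
Proof.
 split. split; [|split; [|split]].
 - intros A B _ H. apply mus_ext; auto.
 - intros; apply mus_ge0.
 - apply mus_True.
 - apply mus_sigma.
 - apply mus_inv.
Qed.

Lemma mus_le_nu U : is_open X d U -> forall C, (forall x, C x -> U x) -> mus C <= nu U.
Proof. intros HU C HC. eapply Rle_trans. apply (mus_le C U); auto. apply rho_le. Qed.

End Construct.

Definition dec (P : Prop) : bool := if excluded_middle_informative P then true else false.
Lemma dec_true (P : Prop) : dec P = true <-> P.
Proof. unfold dec; destruct excluded_middle_informative; split; auto; intros; try discriminate; tauto. Qed.

Lemma ind_add (P Q : Prop) : ~ (P /\ Q) ->
  ((if dec (P \/ Q) then 1 else 0) = (if dec P then 1 else 0) + (if dec Q then 1 else 0))%nat.
Proof. intros H. unfold dec. destruct (excluded_middle_informative (P \/ Q));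
 destruct (excluded_middle_informative P); destruct (excluded_middle_informative Q); tauto. Qed.

Section Empirical.
Variable X : Type.
Variable T : X -> X.
Variable x0 : X.

Definition cntN (A : X -> Prop) (a len : nat) : nat :=
  length (filter (fun n => dec (A (iter n T x0))) (seq a len)).

Lemma cnt_cons A a len : cntN A a (S len) = ((if dec (A (iter a T x0)) then 1 else 0) + cntN A (S a) len)%nat.
Proof. unfold cntN. simpl. destruct dec; reflexivity. Qed.

Lemma cnt_le A a len : (cntN A a len <= len)%nat.
Proof. revert a; induction len; intros a. unfold cntN; simpl; lia. rewrite cnt_cons. specialize (IHlen (S a)). destruct dec; lia. Qed.

Lemma cnt_add A B a len : (forall x, A x -> B x -> False) ->
  cntN (fun x => A x \/ B x) a len = (cntN A a len + cntN B a len)%nat.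
Proof. intros H. revert a; induction len; intros a. reflexivity.
 rewrite !cnt_cons, IHlen. rewrite ind_add. lia. intros [H1 H2]; eauto.
Qed.

Lemma cnt_mono A B a len : (forall x, A x -> B x) -> (cntN A a len <= cntN B a len)%nat.
Proof. intros H. revert a; induction len; intros a. unfold cntN; simpl; lia. rewrite !cnt_cons.
 specialize (IHlen (S a)). destruct (dec (A (iter a T x0))) eqn:EA; destruct (dec (B (iter a T x0))) eqn:EB; try lia.
 apply (proj1 (dec_true _)) in EA. assert (dec (B (iter a T x0)) = true) by (apply (proj2 (dec_true _)), H, EA). congruence. Qed.

Lemma cnt_True a len : cntN (fun _ => True) a len = len.
Proof. revert a; induction len; intros a. reflexivity. rewrite cnt_cons, IHlen.
 assert (dec True = true) by (apply dec_true; auto). rewrite H. lia. Qed.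

Lemma cnt_shift A a len : cntN (fun x => A (T x)) a len = cntN A (S a) len.
Proof. revert a; induction len; intros a. reflexivity. rewrite !cnt_cons, IHlen. reflexivity. Qed.

Lemma cnt_snoc A a len : cntN A a (S len) = (cntN A a len + (if dec (A (iter (a + len) T x0)) then 1 else 0))%nat.
Proof. unfold cntN. rewrite seq_S, filter_app, length_app. simpl. destruct dec; reflexivity. Qed.

Lemma cnt_diff A a len : Rabs (INR (cntN A (S a) len) - INR (cntN A a len)) <= 1.
Proof.
 pose proof (cnt_cons A a len) as H1. pose proof (cnt_snoc A a len) as H2.
 assert (E : cntN A (S a) len = cntN A a len \/ cntN A (S a) len = S (cntN A a len) \/ S (cntN A (S a) len) = cntN A a len).
 { destruct (dec (A (iter a T x0))); destruct (dec (A (iter (a + len) T x0))); lia. }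
 destruct E as [E|[E|E]].
 - rewrite E. rewrite Rminus_diag, Rabs_R0. lra.
 - rewrite E, S_INR. replace (INR (cntN A a len) + 1 - INR (cntN A a len)) with 1 by ring. rewrite Rabs_R1; lra.
 - rewrite <- E, S_INR. replace (INR (cntN A (S a) len) - (INR (cntN A (S a) len) + 1)) with (-1) by ring. rewrite Rabs_left; lra.
Qed.

Variable Uf : (nat -> Prop) -> Prop.
Hypothesis HU : is_ultra Uf.
Variables (a len : nat -> nat).
Hypothesis Hlen : forall k, (S k <= len k)%nat.

Definition emp (A : X -> Prop) (k : nat) : R := INR (cntN A (a k) (len k)) / INR (len k).

Lemma len_pos k : 0 < INR (len k).
Proof. apply lt_0_INR. specialize (Hlen k). lia. Qed.

Lemma emp01 A k : 0 <= emp A k <= 1.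
Proof. unfold emp. pose proof (len_pos k). pose proof (le_INR _ _ (cnt_le A (a k) (len k))).
 pose proof (pos_INR (cntN A (a k) (len k))). split.
 apply Rmult_le_pos; auto. left; apply Rinv_0_lt_compat; auto.
 apply (Rmult_le_reg_r (INR (len k))); auto. unfold Rdiv. rewrite Rmult_assoc, Rinv_l; lra. Qed.

Definition nuE (A : X -> Prop) : R := ulim Uf (emp A).

Lemma nuE_spec A : is_ulim Uf (emp A) (nuE A).
Proof. apply ulim_spec01; auto. intros; apply emp01. Qed.

Lemma nuE01 A : 0 <= nuE A <= 1.
Proof. split. apply (ulim_le Uf HU (fun _ => 0) (emp A)); auto. apply ulim_const; auto. apply nuE_spec. intros; apply emp01.
 apply (ulim_le Uf HU (emp A) (fun _ => 1)); auto. apply nuE_spec. apply ulim_const; auto. intros; apply emp01. Qed.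

Lemma nuE_add A B : (forall x, A x -> B x -> False) -> nuE (fun x => A x \/ B x) = nuE A + nuE B.
Proof. intros H. apply (ulim_unique Uf HU (emp (fun x => A x \/ B x))). apply nuE_spec.
 apply (ulim_ext Uf HU (fun k => emp A k + emp B k)). intros k. unfold emp. rewrite cnt_add, plus_INR; auto. field.
 apply Rgt_not_eq, len_pos.
 apply ulim_plus; auto; apply nuE_spec. Qed.

Lemma nuE_mono A B : (forall x, A x -> B x) -> nuE A <= nuE B.
Proof. intros H. apply (ulim_le Uf HU (emp A) (emp B)); auto; try apply nuE_spec.
 intros k. unfold emp. unfold Rdiv. apply Rmult_le_compat_r. left; apply Rinv_0_lt_compat, len_pos.
 apply le_INR, cnt_mono; auto. Qed.

Lemma nuE_T : nuE (fun _ => True) = 1.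
Proof. apply (ulim_unique Uf HU (emp (fun _ => True))). apply nuE_spec.
 apply (ulim_ext Uf HU (fun _ => 1)). intros k. unfold emp. rewrite cnt_True. field. apply Rgt_not_eq, len_pos.
 apply ulim_const; auto. Qed.

Lemma nuE_inv A : nuE (fun x => A (T x)) = nuE A.
Proof.
 apply (ulim_unique Uf HU (emp (fun x => A (T x)))). apply nuE_spec.
 rewrite <- (Rplus_0_r (nuE A)).
 apply (ulim_ext Uf HU (fun k => emp A k + (emp (fun x => A (T x)) k - emp A k))). intros; ring.
 apply ulim_plus; auto. apply nuE_spec. apply ulim_vanish; auto. intros k. unfold emp.
 rewrite cnt_shift. pose proof (len_pos k).
 replace (INR (cntN A (S (a k)) (len k)) / INR (len k) - INR (cntN A (a k) (len k)) / INR (len k))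
   with ((INR (cntN A (S (a k)) (len k)) - INR (cntN A (a k) (len k))) * / INR (len k)) by (field; lra).
 rewrite Rabs_mult, (Rabs_right (/ _)). 2: left; apply Rinv_0_lt_compat; auto.
 apply Rle_trans with (1 * / INR (len k)). apply Rmult_le_compat_r. left; apply Rinv_0_lt_compat; auto. apply cnt_diff.
 rewrite Rmult_1_l. apply Rinv_le_contravar. pose proof (pos_INR k); lra.
 specialize (Hlen k). apply le_INR in Hlen. rewrite S_INR in Hlen. lra.
Qed.

End Empirical.

Section Part2.
Variable X : Type.
Variable d : X -> X -> R.
Hypothesis Hm : is_metric X d.
Hypothesis Hcpt : is_compact X d.
Variable T : X -> X.
Hypothesis Hcont : is_continuous X d T.

Definition fullC (C : X -> Prop) := is_closed X d C /\ forall mu, is_T_invariant X d T mu -> mu C = 1.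

Lemma list_inter_full (l : list (option {C | fullC C})) :
  fullC (fun y => forall c, In (Some c) l -> proj1_sig c y).
Proof.
 induction l as [|i l IH].
 - split. apply (closed_ext _ _ _ _ (closed_True _ _)). intros y; split; auto. intros _ c [].
   intros mu Hmu. rewrite (mu_ext _ _ _ (proj1 Hmu) _ (fun _ => True)). apply (mu_True _ _ _ (proj1 Hmu)).
   apply borel_closed. apply (closed_ext _ _ _ _ (closed_True _ _)). intros y; split; auto. intros _ c [].
   intros y; split; auto. intros _ c [].
 - destruct IH as [IH1 IH2]. destruct i as [c|].
   + assert (Hext : forall y, (proj1_sig c y /\ forall c', In (Some c') l -> proj1_sig c' y) <->
        (forall c', In (Some c') (Some c :: l) -> proj1_sig c' y)).
     { intros y; split. intros [H1 H2] c' [H|H]. inversion H; subst; auto. auto.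
       intros H. split. apply H; left; auto. intros c' Hc'; apply H; right; auto. }
     destruct (proj2_sig c) as [Hc1 Hc2].
     split. apply (closed_ext _ _ _ _ (closed_inter _ _ _ _ Hc1 IH1)). auto.
     intros mu Hmu. rewrite <- (mu_ext _ _ _ (proj1 Hmu) _ _ (borel_inter _ _ _ _ (borel_closed _ _ _ Hc1) (borel_closed _ _ _ IH1)) Hext).
     apply mu_inter_full with d; auto. apply (proj1 Hmu). apply borel_closed; auto. apply borel_closed; auto.
   + assert (Hext : forall y, (forall c', In (Some c') l -> proj1_sig c' y) <->
        (forall c', In (Some c') (None :: l) -> proj1_sig c' y)).
     { intros y; split. intros H c' [H'|H']. discriminate. auto. intros H c' Hc'; apply H; right; auto. }
     split. apply (closed_ext _ _ _ _ IH1 Hext).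
     intros mu Hmu. rewrite <- (mu_ext _ _ _ (proj1 Hmu) _ _ (borel_closed _ _ _ IH1) Hext). auto.
Qed.

Lemma supp_reduce U : is_open X d U -> (forall y, supp X d T y -> U y) ->
  exists C, fullC C /\ (forall y, C y -> U y).
Proof.
 intros HU HsU.
 set (G := fun i : option {C | fullC C} => match i with None => U | Some c => fun y => ~ proj1_sig c y end).
 destruct (Hcpt _ G) as [l Hl].
 { intros [c|]; simpl; auto. exact (proj1 (proj2_sig c)). }
 { intros y. destruct (classic (U y)) as [Uy|nUy]. exists None; auto.
   assert (Hns : ~ supp X d T y) by auto. unfold supp in Hns.
   apply not_all_ex_not in Hns as [C HC]. apply imply_to_and in HC as [HCc HC].
   apply imply_to_and in HC as [HCf nCy].
   exists (Some (exist _ C (conj HCc HCf))). simpl. auto. }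
 exists (fun y => forall c, In (Some c) l -> proj1_sig c y). split. apply list_inter_full.
 intros y Hy. destruct (Hl y) as [[c|] [Hin Hc]]; simpl in Hc; auto. exfalso; apply Hc, Hy; auto.
Qed.

Lemma part2 : has_density_property d T (supp X d T).
Proof.
 intros x0 U HU HsU.
 destruct (supp_reduce U HU HsU) as [C [[HCc HCf] HCU]].
 apply NNPP. intros Hnd. unfold banach_density_one in Hnd.
 apply not_all_ex_not in Hnd as [lam Hl]. apply imply_to_and in Hl as [Hlam Hl].
 assert (Hk : forall k : nat, exists p : nat * nat, (S k <= snd p)%nat /\
    ~ exists l, NoDup l /\ (forall n, In n l -> (fst p <= n < fst p + snd p)%nat /\ U (iter n T x0)) /\
      lam * INR (snd p) <= INR (length l)).
 { intros k. apply NNPP; intro H. apply Hl. exists (S k). split. lia. intros a len Hlen.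
   apply NNPP; intro H'. apply H. exists (a, len). simpl. auto. }
 set (p := fun k => proj1_sig (constructive_indefinite_description _ (Hk k))).
 assert (Hp : forall k, (S k <= snd (p k))%nat /\
    ~ exists l, NoDup l /\ (forall n, In n l -> (fst (p k) <= n < fst (p k) + snd (p k))%nat /\ U (iter n T x0)) /\
      lam * INR (snd (p k)) <= INR (length l)).
 { intros k. unfold p. destruct constructive_indefinite_description; auto. }
 set (a := fun k => fst (p k)). set (len := fun k => snd (p k)).
 assert (Hlen : forall k, (S k <= len k)%nat) by (intros k; apply Hp).
 destruct nat_ultra as [Uf HUf].
 set (nu := nuE X T x0 Uf a len).
 pose proof (mus_invariant X d Hm Hcpt T Hcont nu (nuE01 X T x0 Uf HUf a len Hlen) (nuE_add X T x0 Uf HUf a len Hlen)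
   (nuE_mono X T x0 Uf HUf a len Hlen) (nuE_T X T x0 Uf HUf a len Hlen) (nuE_inv X T x0 Uf HUf a len Hlen)) as Hinv.
 specialize (HCf _ Hinv).
 pose proof (mus_le_nu X d nu (nuE01 X T x0 Uf HUf a len Hlen) (nuE_add X T x0 Uf HUf a len Hlen)
   (nuE_mono X T x0 Uf HUf a len Hlen) U HU C HCU) as Hle.
 assert (HnuU : nu U <= lam).
 { apply (ulim_le Uf HUf (emp X T x0 a len U) (fun _ => lam)). apply nuE_spec; auto. apply ulim_const; auto.
   intros k. destruct (Hp k) as [_ Hno].
   set (l := filter (fun n => dec (U (iter n T x0))) (seq (a k) (len k))).
   assert (Hlt : ~ (lam * INR (len k) <= INR (length l))).
   { intro H. apply Hno. exists l. split. apply NoDup_filter, seq_NoDup. split; auto.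
     intros n Hn. unfold l in Hn. apply filter_In in Hn. destruct Hn as [Hn1 Hn2]. apply in_seq in Hn1.
     split. exact Hn1. apply (proj1 (dec_true _)); auto. }
   unfold emp. change (cntN X T x0 U (a k) (len k)) with (length l).
   pose proof (len_pos len Hlen k). 
   apply Rnot_le_lt in Hlt. apply (Rmult_le_reg_r (INR (len k))); auto. unfold Rdiv. rewrite Rmult_assoc, Rinv_l; lra. }
 lra.
Qed.
End Part2.

Theorem mainTheorem15 (X : Type) (d : X -> X -> R) (T : X -> X)
  (Hmetric : is_metric X d) (Hne : inhabited X) (Hcpt : is_compact X d)
  (Hcont : is_continuous X d T) :
  is_closed X d (supp X d T) /\
  has_density_property d T (supp X d T) /\
  (forall K : X -> Prop, is_closed X d K -> has_density_property d T K ->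
     forall x, supp X d T x -> K x).
Proof.
 split; [|split].
 - apply (closed_ext _ _ (fun y => forall C, fullC X d T C -> C y)).
   apply closed_inter_all. intros C [H _]; auto.
   intros y; unfold supp, fullC; split. intros H C HC Hf; apply H; split; auto. intros H C [HC Hf]; apply H; auto.
 - apply part2; auto.
 - intros K HK Hd y Hy. apply Hy; auto. intros mu Hmu.
   apply (part3_measure X d Hmetric T Hcont mu (proj1 Hmu) K HK Hd Hmu).
Qed.
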